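(* Let $L(\mathbf{w})=\frac1n\sum_{k=1}^Kn_kL_k(\mathbf{w})$ be the global loss over $K$ devices with $n_k\ge1$ samples, $n=\sum_kn_k$, with $\mathbf{w}^*$ its optimal model. Assume (i) $\nabla L$ is Lipschitz continuous with modulus $\ell>0$, and (ii) $L$ is $\mu$-strongly convex with $\mu>0$: $L(\mathbf{u})\ge L(\mathbf{v})+\nabla L(\mathbf{v})^\top(\mathbf{u}-\mathbf{v})+\frac\mu2\|\mathbf{u}-\mathbf{v}\|^2$ for all $\mathbf{u},\mathbf{v}$. Starting from $\mathbf{w}^1$, in each round $i=1,2,\dots$ let $\mathbf{g}_k^i=\nabla L_k(\mathbf{w}^i)$ (assumed nonzero), draw a device $X^i$ with probabilities $$p_k^{i*}=\frac{n_k}{n}\|\mathbf{g}_k^i\|\sqrt{\frac{\rho}{(1-\rho)T_k^{\mathrm{U},i}+\lambda^{i*}}},$$ where $\rho\in(0,1]$, $T_k^{\mathrm{U},i}=\frac{qS}{B\log_2(1+\gamma_k^i)}$ and $\lambda^{i*}$ is chosen so that $\sum_kp_k^{i*}=1$, and update $\mathbf{w}^{i+1}=\mathbf{w}^i-\eta^i\frac{n_{X^i}}{np^{i*}_{X^i}}\mathbf{g}^i_{X^i}$ with learning rates $0<\eta^i<\frac1{2\mu}$. Then for every $t\ge1$, $$\mathbb{E}\{L(\mathbf{w}^{t+1})-L(\mathbf{w}^* )\}\le\prod_{i=1}^t(1-2\mu\eta^i)\,\mathbb{E}\{L(\mathbf{w}^1)-L(\mathbf{w}^* )\}+\frac{\ell}{2n}\sum_{i=1}^tA^i(\eta^i)^2\sum_{k=1}^Kn_k\|\mathbf{g}_k^i\|\sqrt{\frac{(1-\rho)T_k^{\mathrm{U},i}+\lambda^{i*}}{\rho}},$$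 where $A^i=\prod_{j=i+1}^t(1-2\mu\eta^j)$.
   Context: $S$ is the number of model parameters, $q$ the number of bits per gradient element, $B$ the system bandwidth, $\gamma_k^i>0$ the uplink SNR of device $k$ in round $i$; $T_k^{\mathrm{U},i}$ is device $k$'s gradient upload latency. The probabilities $p_k^{i*}$ are the importance- and channel-aware scheduling policy minimizing, over distributions $(p_k)$, $\sum_k p_k\big(\rho\|\frac{n_k}{np_k}\mathbf{g}_k^i-\nabla L(\mathbf{w}^i)\|^2+(1-\rho)T_k^i\big)$, with $T_k^i$ the one-round latency when device $k$ is scheduled. *)

(* Defs.v *)
From HB Require Import structures.
From mathcomp Require Import all_boot all_order all_algebra.
From mathcomp Require Import all_classical all_reals all_analysis.
Set Implicit Arguments. Unset Strict Implicit. Unset Printing Implicit Defensive.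
Import Order.TTheory GRing.Theory Num.Theory.
Import numFieldNormedType.Exports.
Local Open Scope ring_scope.

Section FL.
Variable R : realType.

Definition dotv (d : nat) (u v : 'rV[R]_d) : R := \sum_(j < d) u 0 j * v 0 j.
Definition enorm (d : nat) (u : 'rV[R]_d) : R := Num.sqrt (dotv u u).

Definition is_gradient (d : nat) (f : 'rV[R]_d -> R) (g : 'rV[R]_d -> 'rV[R]_d) :=
  forall w, differentiable f w /\ forall v, 'd f w v = dotv (g w) v.

Definition log2 (x : R) : R := ln x / ln 2.

Definition upload_latency (q S B gamma : R) : R := q * S / (B * log2 (1 + gamma)).

(* Trajectory of the (random) iterates as a function of the history of
   scheduled devices h = [:: X^1; ...; X^m]; returns w^{m+1}.
   step i w x = w^{i+1} when w^i = w and X^i = x. *)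
Definition traj (d K : nat) (step : nat -> 'rV[R]_d -> 'I_K -> 'rV[R]_d)
    (w1 : 'rV[R]_d) (h : seq 'I_K) : 'rV[R]_d :=
  (foldl (fun (s : nat * 'rV[R]_d) x => (s.1.+1, step s.1 s.2 x)) (1%N, w1) h).2.

(* Probability of the history h: prod_i P i w^i X^i, where P i w k is the
   probability of scheduling device k in round i when the model is w. *)
Definition hprob (d K : nat) (P : nat -> 'rV[R]_d -> 'I_K -> R)
    (step : nat -> 'rV[R]_d -> 'I_K -> 'rV[R]_d)
    (w1 : 'rV[R]_d) (h : seq 'I_K) : R :=
  (foldl (fun (s : nat * 'rV[R]_d * R) x =>
            (s.1.1.+1, step s.1.1 s.1.2 x, s.2 * P s.1.1 s.1.2 x))
         (1%N, w1, 1) h).2.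

(* Expectation of F(w^{m+1}) (F may depend on w^{m+1} only), where the
   expectation is over the scheduling decisions X^1..X^m. *)
Definition expect (d K : nat) (P : nat -> 'rV[R]_d -> 'I_K -> R)
    (step : nat -> 'rV[R]_d -> 'I_K -> 'rV[R]_d)
    (w1 : 'rV[R]_d) (m : nat) (F : 'rV[R]_d -> R) : R :=
  \sum_(h : m.-tuple 'I_K) hprob P step w1 h * F (traj step w1 h).

End FL.

(* Main.v *)
Require Import Defs.
From HB Require Import structures.
From mathcomp Require Import all_boot all_order all_algebra.
From mathcomp Require Import all_classical all_reals all_analysis.
From mathcomp Require Import lra ring.
Import Order.TTheory GRing.Theory Num.Theory.
Import numFieldNormedType.Exports.
Local Open Scope ring_scope.

Section S.
Context {R : realType}.
Context {d : nat}.
Implicit Types u v h : 'rV[R]_d.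

Lemma dotvC u v : dotv u v = dotv v u.
Proof. by apply: eq_bigr => j _; rewrite mulrC. Qed.
Lemma dotvDl u v w : dotv (u + v) w = dotv u w + dotv v w.
Proof. by rewrite /dotv -big_split; apply: eq_bigr => j _; rewrite mxE mulrDl. Qed.
Lemma dotvZl (a : R) u w : dotv (a *: u) w = a * dotv u w.
Proof. by rewrite /dotv mulr_sumr; apply: eq_bigr => j _; rewrite mxE mulrA. Qed.
Lemma dotvNl u w : dotv (- u) w = - dotv u w.
Proof. by rewrite -scaleN1r dotvZl mulN1r. Qed.
Lemma dotvBl u v w : dotv (u - v) w = dotv u w - dotv v w.
Proof. by rewrite dotvDl dotvNl. Qed.
Lemma dotvDr u v w : dotv w (u + v) = dotv w u + dotv w v.
Proof. by rewrite dotvC dotvDl !(dotvC w). Qed.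
Lemma dotvZr (a : R) u w : dotv w (a *: u) = a * dotv w u.
Proof. by rewrite dotvC dotvZl dotvC. Qed.
Lemma dotvNr u w : dotv w (- u) = - dotv w u.
Proof. by rewrite dotvC dotvNl dotvC. Qed.
Lemma dotvBr u v w : dotv w (u - v) = dotv w u - dotv w v.
Proof. by rewrite dotvDr dotvNr. Qed.
Lemma dotv_suml (I : finType) (F : I -> 'rV[R]_d) w :
  dotv (\sum_i F i) w = \sum_i dotv (F i) w.
Proof.
rewrite /dotv exchange_big /=; apply: eq_bigr => j _.
by rewrite summxE mulr_suml.
Qed.
Lemma dotv_ge0 u : 0 <= dotv u u.
Proof. by apply: sumr_ge0 => j _; rewrite -expr2 sqr_ge0. Qed.
Lemma enorm_sq u : enorm u ^+ 2 = dotv u u.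
Proof. by rewrite /enorm sqr_sqrtr // dotv_ge0. Qed.
Lemma enorm_ge0 u : 0 <= enorm u.
Proof. exact: sqrtr_ge0. Qed.
Lemma dotv_eq0 u : dotv u u = 0 -> u = 0.
Proof.
move=> /eqP; rewrite psumr_eq0; last by move=> j _; rewrite -expr2 sqr_ge0.
move=> /allP H; apply/rowP => j; rewrite mxE.
have := H j (mem_index_enum _); rewrite /= -expr2 sqrf_eq0.
by move/eqP.
Qed.
Lemma enorm_gt0 u : u != 0 -> 0 < enorm u.
Proof.
move=> nu; rewrite /enorm sqrtr_gt0 lt_def dotv_ge0 andbT.
by apply/eqP => /dotv_eq0 /eqP; apply/negP.
Qed.
Lemma young_dot u w (t : R) : 0 < t -> 2 * dotv u w <= t * dotv u u + dotv w w / t.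
Proof.
move=> t0.
have H := dotv_ge0 (t *: u - w).
rewrite !(dotvBl, dotvBr, dotvZl, dotvZr) in H.
rewrite -(ler_pM2l t0) mulrDr [t * (_ / t)]mulrCA mulfV ?gt_eqF // mulr1.
rewrite (dotvC w u) in H. lra.
Qed.
Lemma enormZ (c : R) u : 0 <= c -> enorm (c *: u) = c * enorm u.
Proof.
move=> c0; rewrite /enorm dotvZl dotvZr mulrA sqrtrM ?mulr_ge0 //.
by rewrite -expr2 sqrtr_sqr ger0_norm.
Qed.

Lemma descent (f : 'rV[R]_d -> R) (g : 'rV[R]_d -> 'rV[R]_d) (ell : R) v h :
  (forall s : R, is_derive s 1 (fun s : R => f (v + s *: h)) (dotv (g (v + s *: h)) h)) ->
  0 < ell -> (forall u w, enorm (g u - g w) <= ell * enorm (u - w)) ->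
  f (v + h) <= f v + dotv (g v) h + ell / 2 * enorm h ^+ 2.
Proof.
move=> Hd l0 Lip.
pose F := (fun s : R => f (v + s *: h)) - (dotv (g v) h) \*: (@id R)
   - (ell / 2 * dotv h h) \*: ((@id R) ^+ 2).
have dF : forall s : R, is_derive s (1:R) F (dotv (g (v + s *: h)) h - dotv (g v) h *: 1
    - (ell / 2 * dotv h h) *: ((2%:R * s ^+ 1) *: 1)).
  move=> s; exact: is_deriveB.
have [c c01 Hc] : exists2 c, c \in `]0, 1[%R & F 1 - F 0 =
   (dotv (g (v + c *: h)) h - dotv (g v) h *: 1
    - (ell / 2 * dotv h h) *: ((2%:R * c ^+ 1) *: 1)) * (1 - 0).
  apply: MVT => //.
  apply: derivable_within_continuous => s _.
  by have [] := dF s.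
have E (s : R) : F s = f (v + s *: h) - dotv (g v) h *: s - (ell / 2 * dotv h h) *: (s * s) by [].
have sc (x y : R) : x *: y = x * y by [].
move: Hc; rewrite !E !sc scale0r scale1r addr0 !mulr1 !mulr0 !subr0 expr1 => Hc.
have c0 : 0 < c by move: c01; rewrite in_itv /= => /andP [].
set D := g (v + c *: h) - g v.
have L1 : enorm D <= ell * c * enorm h.
  by have := Lip (v + c *: h) v; rewrite addrAC subrr add0r (enormZ _ _ (ltW c0)) mulrA.
have HD : dotv D D <= (ell * c) ^+ 2 * dotv h h.
  rewrite -!enorm_sq -exprMn; have := enorm_ge0 D; nra.
have lc0 : 0 < ell * c by rewrite mulr_gt0.
have lci : 0 < (ell * c)^-1 by rewrite invr_gt0.
have Y := young_dot D h (ell * c)^-1 lci.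
rewrite invrK in Y.
have Y2 : (ell * c)^-1 * dotv D D <= ell * c * dotv h h.
  rewrite -(ler_pM2l lc0) mulrA mulfV ?gt_eqF // mul1r (mulrA (ell * c)) -expr2 //.
have Y3 : dotv D h <= ell * c * dotv h h.
  rewrite (mulrC (dotv h h)) in Y. lra.
rewrite /D dotvBl in Y3.
rewrite enorm_sq.
have hh := dotv_ge0 h.
have : ell / 2 * dotv h h * (2 * c) = ell * c * dotv h h.
  by field.
nra.
Qed.
Lemma pl_aux (G z : 'rV[R]_d) (mu : R) : 0 < mu -> - dotv G G <= 2 * mu * (dotv G z + mu / 2 * dotv z z).
Proof.
move=> mu0; have H := dotv_ge0 (G + mu *: z).
rewrite dotvDl !dotvDr !dotvZl !dotvZr (dotvC z G) in H.
have -> : 2 * mu * (dotv G z + mu / 2 * dotv z z) = mu * dotv G z + mu * dotv G z + mu * (mu * dotv z z) by field.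
lra.
Qed.

Lemma line_derive (f : 'rV[R]_d -> R) g v h (s : R) : is_gradient f g ->
  is_derive s 1 (fun s : R => f (v + s *: h)) (dotv (g (v + s *: h)) h).
Proof.
move=> /(_ (v + s *: h)) [df dE].
have E : (fun t : R => t^-1 *: (((fun s : R => f (v + s *: h)) \o shift s) (t *: 1) - f (v + s *: h)))
   = (fun t : R => t^-1 *: ((f \o shift (v + s *: h)) (t *: h) - f (v + s *: h))).
  apply: funext => t /=; congr (_ *: (f _ - _)).
  by rewrite /shift scaler1 scalerDl addrCA addrC.
apply: DeriveDef.
  by rewrite /derivable E; exact: diff_derivable.
by rewrite /derive E -/(derive f _ _) deriveE // dE.
Qed.
End S.

Section E.
Context {R : realType}.
Context {d K : nat}.
Context {P : nat -> 'rV[R]_d -> 'I_K -> R}.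
Context {step : nat -> 'rV[R]_d -> 'I_K -> 'rV[R]_d}.
Context {w1 : 'rV[R]_d}.

Let T (s : nat * 'rV[R]_d) x := (s.1.+1, step s.1 s.2 x).
Let G (s : nat * 'rV[R]_d * R) x :=
  (s.1.1.+1, step s.1.1 s.1.2 x, s.2 * P s.1.1 s.1.2 x).

Lemma foldT (h : seq 'I_K) k w : (foldl T (k, w) h).1 = (k + size h)%N.
Proof.
elim: h k w => [|x h IH] k w /=; first by rewrite addn0.
by rewrite IH addSnnS.
Qed.

Lemma foldG (h : seq 'I_K) k w p : (foldl G (k, w, p) h).1 = foldl T (k, w) h.
Proof. by elim: h k w p => [|x h IH] k w p //=; rewrite IH. Qed.

Lemma traj_rcons h x :
  traj step w1 (rcons h x) = step (size h).+1 (traj step w1 h) x.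
Proof.
rewrite /traj foldl_rcons -/T.
by rewrite {1}/T foldT add1n.
Qed.

Lemma hprob_rcons h x :
  hprob P step w1 (rcons h x) = hprob P step w1 h * P (size h).+1 (traj step w1 h) x.
Proof.
rewrite /hprob foldl_rcons -/G {1}/G /=.
have := foldG h 1 w1 1; case: (foldl G (1%N, w1, 1) h) => [[k w] p] /= E.
have Ek : k = (size h).+1 by rewrite -[k]/((k, w).1) E foldT add1n.
have Ew : w = traj step w1 h by rewrite /traj -/T -E.
by rewrite Ek Ew.
Qed.

Lemma hprob_ge0 h : (forall i w x, 0 <= P i w x) -> 0 <= hprob P step w1 h.
Proof.
move=> HP; elim/last_ind: h => [|h x IH]; first by rewrite /hprob /=.
by rewrite hprob_rcons mulr_ge0.
Qed.

Lemma expect0 F : expect P step w1 0 F = F w1.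
Proof.
rewrite /expect (big_pred1 [tuple]) /=; first by rewrite /hprob /traj /= mul1r.
by move=> t; apply/esym/eqP/val_inj; case: t => -[].
Qed.

Lemma expectS m F : expect P step w1 m.+1 F =
  expect P step w1 m (fun w => \sum_x P m.+1 w x * F (step m.+1 w x)).
Proof.
rewrite /expect.
pose f (p : m.-tuple 'I_K * 'I_K) : m.+1.-tuple 'I_K := [tuple of rcons p.1 p.2].
pose g (u : m.+1.-tuple 'I_K) : m.-tuple 'I_K * 'I_K :=
  ([tuple of belast (thead u) (behead u)], last (thead u) (behead u)).
have fK : cancel f g.
  move=> [t x]; rewrite /g /f.
  have E : thead [tuple of rcons t x] :: behead [tuple of rcons t x] = rcons t x.
    by rewrite -[RHS]/(val [tuple of rcons t x]) {3}(tuple_eta [tuple of rcons t x]).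
  move: E; rewrite lastI => /rcons_inj [E1 E2].
  by congr (_, _) => //; apply: val_inj; rewrite /= E1.
have gK : cancel g f.
  move=> u; apply: val_inj; rewrite /f /g /= -lastI.
  by rewrite {3}(tuple_eta u).
rewrite (reindex f) /=; last by exists g => ? _.
rewrite -(pair_bigA _ (fun (t : m.-tuple (ordinal K)) (x : ordinal K) => hprob P step w1 (rcons t x) * F (traj step w1 (rcons t x)))) /=.
apply: eq_bigr => t _; rewrite mulr_sumr; apply: eq_bigr => x _.
by rewrite hprob_rcons traj_rcons size_tuple mulrA.
Qed.

Lemma expect_le m F1 F2 : (forall i w x, 0 <= P i w x) ->
  (forall h : m.-tuple 'I_K, F1 (traj step w1 h) <= F2 (traj step w1 h)) ->
  expect P step w1 m F1 <= expect P step w1 m F2.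
Proof.
move=> HP H; apply: ler_sum => h _; apply: ler_wpM2l; first exact: hprob_ge0.
exact: H.
Qed.

Lemma expect_lin m F1 F2 (a b : R) :
  expect P step w1 m (fun w => a * F1 w + b * F2 w) =
  a * expect P step w1 m F1 + b * expect P step w1 m F2.
Proof.
rewrite /expect !mulr_sumr -big_split; apply: eq_bigr => h _ /=; ring.
Qed.
End E.

Theorem theorem2 (R : realType) (d K : nat)
    (ns : 'I_K -> nat) (Lk : 'I_K -> 'rV[R]_d -> R)
    (Gk : 'I_K -> 'rV[R]_d -> 'rV[R]_d)
    (ell mu rho q B : R) (gamma : nat -> 'I_K -> R)
    (eta : nat -> R) (lam : nat -> 'rV[R]_d -> R)
    (w1 wstar : 'rV[R]_d) :
  let n : nat := (\sum_(k < K) ns k)%N in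
  let L : 'rV[R]_d -> R := fun w => n%:R^-1 * \sum_(k < K) (ns k)%:R * Lk k w in
  let gradL : 'rV[R]_d -> 'rV[R]_d :=
    fun w => n%:R^-1 *: \sum_(k < K) (ns k)%:R *: Gk k w in
  let TU : nat -> 'I_K -> R :=
    fun i k => upload_latency q d%:R B (gamma i k) in
  let pstar : nat -> 'rV[R]_d -> 'I_K -> R :=
    fun i w k => (ns k)%:R / n%:R * enorm (Gk k w) *
                 Num.sqrt (rho / ((1 - rho) * TU i k + lam i w)) in
  let step : nat -> 'rV[R]_d -> 'I_K -> 'rV[R]_d :=
    fun i w x => w - (eta i * ((ns x)%:R / (n%:R * pstar i w x))) *: Gk x w in
  let E := expect pstar step w1 in
  (forall k, (0 < ns k)%N) ->
  (forall k, is_gradient (Lk k) (Gk k)) ->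
  (* optimal model *)
  (forall w, L wstar <= L w) ->
  (* (i) Lipschitz gradient *)
  0 < ell ->
  (forall u v, enorm (gradL u - gradL v) <= ell * enorm (u - v)) ->
  (* (ii) strong convexity *)
  0 < mu ->
  (forall u v, L u >= L v + dotv (gradL v) (u - v) + mu / 2 * enorm (u - v) ^+ 2) ->
  0 < rho <= 1 ->
  (0 < q) -> (0 < B) ->
  (forall i k, 0 < gamma i k) ->
  (forall i, (0 < i)%N -> 0 < eta i < 1 / (2 * mu)) ->
  (* along every history h (of length i-1) reaching w^i = traj step w1 h:
     nonzero local gradients, and lambda^{i*} is chosen so that the
     p_k^{i*} are well defined and sum to one *)
  (forall h : seq 'I_K,
     let i := (size h).+1 in let w := traj step w1 h in
     (forall k, Gk k w != 0) /\
     (forall k, 0 < (1 - rho) * TU i k + lam i w) /\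
     \sum_(k < K) pstar i w k = 1) ->
  forall t : nat, (0 < t)%N ->
  E t (fun w => L w - L wstar) <=
    (\prod_(1 <= i < t.+1) (1 - 2 * mu * eta i)) * (L w1 - L wstar)
    + ell / (2 * n%:R) *
      \sum_(1 <= i < t.+1)
        (\prod_(i.+1 <= j < t.+1) (1 - 2 * mu * eta j)) * eta i ^+ 2 *
        E i.-1 (fun w => \sum_(k < K) (ns k)%:R * enorm (Gk k w) *
                 Num.sqrt (((1 - rho) * TU i k + lam i w) / rho)).
Proof.
move=> n L gradL TU pstar step E Hns Hgrad Hopt ell0 Lip mu0 SC /andP[rho0 rho1] q0 B0 gam0 eta0 Hh t t0.
have HdL : forall v h (s : R), is_derive s 1 (fun s : R => L (v + s *: h)) (dotv (gradL (v + s *: h)) h).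
  move=> v h s.
  have -> : (fun s : R => L (v + s *: h)) = n%:R^-1 \*: \sum_(k < K) ((ns k)%:R \*: (fun s : R => Lk k (v + s *: h))).
    by apply: funext => s'; rewrite /L fct_sumE.
  apply: is_derive_eq.
    apply: is_deriveZ; apply: is_derive_sum => k; apply: is_deriveZ.
    exact: (@line_derive R d (Lk k) (Gk k) v h s (Hgrad k)).
  rewrite /gradL dotvZl dotv_suml; congr (_ * _); apply: eq_bigr => k _.
  by rewrite dotvZl.
have desc : forall v h, L (v + h) <= L v + dotv (gradL v) h + ell / 2 * enorm h ^+ 2.
  by move=> v h; apply: (@descent R d L gradL ell v h (HdL v h) ell0 Lip).
have PL : forall w, 2 * mu * (L w - L wstar) <= dotv (gradL w) (gradL w).
  move=> w; have H1 := SC wstar w; have H2 := pl_aux (gradL w) (wstar - w) mu mu0.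
  rewrite enorm_sq in H1.
  nra.
pose S := fun (i : nat) (w : 'rV[R]_d) => \sum_(k < K) (ns k)%:R * enorm (Gk k w) *
                 Num.sqrt (((1 - rho) * TU i k + lam i w) / rho).
have onestep : forall m (h : m.-tuple 'I_K),
  \sum_x pstar m.+1 (traj step w1 h) x * (L (step m.+1 (traj step w1 h) x) - L wstar) <=
  (1 - 2 * mu * eta m.+1) * (L (traj step w1 h) - L wstar) +
  (ell / (2 * n%:R) * eta m.+1 ^+ 2) * S m.+1 (traj step w1 h).
  move=> m h.
  have [Gnz [cpos psum]] := Hh h.
  rewrite /= size_tuple in Gnz cpos psum.
  set w := traj step w1 h in Gnz cpos psum *.
  set i := m.+1.
  have [et0 et1] := andP (eta0 i isT).
  set et := eta i in et0 et1 *.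
  have px : forall x, pstar i w x * (L (step i w x) - L wstar) <=
     pstar i w x * (L w - L wstar) - et * (ns x)%:R / n%:R * dotv (gradL w) (Gk x w)
     + ell / (2 * n%:R) * et ^+ 2 * ((ns x)%:R * enorm (Gk x w) *
                 Num.sqrt (((1 - rho) * TU i x + lam i w) / rho)).
    move=> x.
    have nx : (0 < n)%N by rewrite /n (bigD1 x) //= ltn_addr ?Hns.
    have nR : 0 < n%:R :> R by rewrite ltr0n.
    have nsR : 0 < (ns x)%:R :> R by rewrite ltr0n Hns.
    set g := Gk x w.
    have gn0 : 0 < enorm g by apply: enorm_gt0; exact: Gnz.
    set c := (1 - rho) * TU i x + lam i w.
    have c0 : 0 < c := cpos x.
    set sr := Num.sqrt (rho / c).
    have sr0 : 0 < sr by rewrite sqrtr_gt0 divr_gt0.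
    have scE : Num.sqrt (c / rho) = sr^-1.
      by rewrite -sqrtrV ?divr_ge0 ?ltW // invfM invrK mulrC.
    rewrite scE.
    have pE : pstar i w x = (ns x)%:R / n%:R * enorm g * sr by [].
    set p := pstar i w x in pE *.
    have p0 : 0 < p by rewrite pE; apply: mulr_gt0 => //; apply: mulr_gt0 => //; exact: divr_gt0.
    set r := et * ((ns x)%:R / (n%:R * p)).
    have D := desc w (- (r *: g)).
    have stepE : step i w x = w + - (r *: g) by [].
    rewrite stepE.
    rewrite enorm_sq !dotvNl !dotvNr opprK (dotvZr r g (gradL w)) (dotvZl r g (r *: g)) (dotvZr r g g) -enorm_sq in D.
    have key : p * (L (w + - (r *: g)) - L wstar) <=
       p * (L w - r * dotv (gradL w) g + ell / 2 * (r * (r * enorm g ^+ 2)) - L wstar).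
      by rewrite ler_pM2l // lerD2r.
    have pr : p * r = et * (ns x)%:R / n%:R.
      by rewrite /r; field; rewrite !gt_eqF.
    have id2 : ell / 2 * (r * (r * enorm g ^+ 2)) * p =
       ell / (2 * n%:R) * et ^+ 2 * ((ns x)%:R * enorm g * sr^-1).
      by rewrite /r pE; field; rewrite !gt_eqF // ?mulr_gt0.
    have E1 : p * (L w - r * dotv (gradL w) g + ell / 2 * (r * (r * enorm g ^+ 2)) - L wstar)
       = p * (L w - L wstar) - (p * r) * dotv (gradL w) g + ell / 2 * (r * (r * enorm g ^+ 2)) * p
      by ring.
    by rewrite E1 pr id2 in key.
  apply: le_trans (ler_sum _ (fun x _ => px x)) _.
  have gsum : \sum_x et * (ns x)%:R / n%:R * dotv (gradL w) (Gk x w) = et * dotv (gradL w) (gradL w).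
    rewrite [X in _ = _ * dotv _ X]/gradL dotvZr dotvC dotv_suml mulr_sumr mulr_sumr.
    apply: eq_bigr => x _; rewrite (dotvZl _ (Gk x w) (gradL w)) (dotvC (Gk x w)); ring.
  rewrite !big_split /= sumrN gsum -mulr_suml psum mul1r -mulr_sumr.
  have := ler_wpM2l (ltW et0) (PL w); rewrite /S; nra.
have pge0 : forall i w x, 0 <= pstar i w x.
  by move=> i w x; rewrite /pstar !mulr_ge0 ?divr_ge0 ?ler0n ?enorm_ge0 ?sqrtr_ge0.
have claim : forall t, E t (fun w => L w - L wstar) <=
   \prod_(1 <= i < t.+1) (1 - 2 * mu * eta i) * (L w1 - L wstar) +
   ell / (2 * n%:R) * \sum_(1 <= i < t.+1)
      \prod_(i.+1 <= j < t.+1) (1 - 2 * mu * eta j) * eta i ^+ 2 * E i.-1 (S i).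
  elim=> [|m IH].
    by rewrite /E expect0 !big_geq // mul1r mulr0 addr0.
  rewrite /E expectS.
  apply: le_trans.
    apply: (@expect_le R d K pstar step w1 m _ (fun w => (1 - 2 * mu * eta m.+1) * (L w - L wstar)
         + (ell / (2 * n%:R) * eta m.+1 ^+ 2) * S m.+1 w)) => //.
  rewrite (@expect_lin R d K pstar step w1 m (fun w => L w - L wstar) (S m.+1)) -/E.
  have a0 : 0 <= 1 - 2 * mu * eta m.+1.
    have [e0 e1] := andP (eta0 m.+1 isT).
    rewrite subr_ge0; move: e1; rewrite ltr_pdivlMr ?mulr_gt0 // => e1.
    by rewrite mulrC ltW.
  have IH' := ler_wpM2l a0 IH.
  rewrite [\prod_(1 <= i < m.+2) _]big_nat_recr //= [\sum_(1 <= i < m.+2) _]big_nat_recr //= [\prod_(m.+2 <= j < m.+2) _]big_geq // mul1r.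
  rewrite [\sum_(1 <= i < m.+1) _](eq_big_nat _ _ (F2 := fun i => (1 - 2 * mu * eta m.+1) *
     (\prod_(i.+1 <= j < m.+1) (1 - 2 * mu * eta j) * eta i ^+ 2 * E i.-1 (S i)))); last first.
    move=> i /andP [i1 im]; rewrite big_nat_recr //=; ring.
  rewrite -mulr_sumr.
  move: IH'; set A := \prod_(1 <= i < m.+1) _; set Bs := \sum_(1 <= i < m.+1) _.
  move=> IH'; nra.
exact: claim.
Qed.
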